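(* Let $f$ be a planar discrete curve and $c\in\mathcal{P}^\pm$ a circle congruence along $f$ lying in a linear complex $\overline{\mathfrak{m}}$, i.e. $\langle\mathfrak{c}_i,\overline{\mathfrak{m}}\rangle=0$ for all $i$. Then the M-inversions $\sigma_{r_{ij}}$ in $$\mathfrak{r}_{ij}:=\mathfrak{c}_i\langle\mathfrak{c}_j,\mathfrak{p}\rangle-\mathfrak{c}_j\langle\mathfrak{c}_i,\mathfrak{p}\rangle$$ form an $(\overline{\mathfrak{m}})$-type Darboux evolution map for $f$ if and only if there exists a tangential circle congruence $t:\mathcal{E}\to\mathbb{P}(\mathcal{L})$, i.e. circles $t_{ij}$ with $\mathfrak{t}_{ij}\perp\mathfrak{f}_i,\mathfrak{f}_j,\mathfrak{c}_i,\mathfrak{c}_j$ for every edge $(ij)$.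
   Context: Planar light cone model: $\mathbb{R}^{3,2}$ with form of signature $(3,2)$, light cone $\mathcal{L}$; fixed $\mathfrak{p}$ with $\langle\mathfrak{p},\mathfrak{p}\rangle=-1$; $v$ with $\langle\mathfrak{v},\mathfrak{p}\rangle=0$ are points of $\mathbb{R}^2\cup\{\infty\}$, others oriented circles/lines; oriented contact = orthogonality. Inversion in $\mathfrak{a}$: $\sigma_a(x)=x-\frac{2\langle x,\mathfrak{a}\rangle}{\langle\mathfrak{a},\mathfrak{a}\rangle}\mathfrak{a}$; M-inversion if $\mathfrak{a}\perp\mathfrak{p}$. A discrete curve $f:\mathcal{V}\to\mathbb{P}(\mathcal{L})$ maps consecutive integers to points; $\mathcal{E}$ its edges. $\mathcal{P}^\pm_i:=\{\mathfrak{f}_{i-1},\mathfrak{f}_{i+1}\}^\perp\cap\mathcal{L}$ (circles through $f_{i-1},f_{i+1}$); a circle congruence $c\in\mathcal{P}^\pm$ chooses $c_i$ in this pencil at each vertex. An evolution map of $f$ assigns to each edge $(ij)$ an M-inversion $\sigma_{ij}$ with $\sigma_{ij}(f_i)=f_j$; it is of $(\mathfrak{m})$-type if all elements of the 2-dimensional space $\mathrm{span}\{\mathfrak{m},\mathfrak{p}\}$ are fixed by all $\sigma_{ij}$. It is an $(\mathfrak{m})$-type Darboux evolution map if moreover it evolves a circle congruence $c\in\mathcal{P}^\pm$: $\sigma_{ij}(\mathfrak{c}_i)=\mathfrak{c}_j$ for representatives with $\langle\mathfrak{c}_i,\mathfrak{p}\rangle=\langle\mathfrak{c}_j,\mathfrak{p}\rangle=-1$.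 *)

(* Defs.v *)
From HB Require Import structures.
From mathcomp Require Import all_boot all_order all_algebra.
Set Implicit Arguments. Unset Strict Implicit. Unset Printing Implicit Defensive.
Import Order.TTheory GRing.Theory Num.Theory.
Local Open Scope ring_scope.

Section Defs.
Variable R : realFieldType.
Notation vec := 'rV[R]_5.

Definition ip (x y : vec) : R :=
  \sum_(k < 5) (if (k < 3)%N then 1 else -1) * x 0 k * y 0 k.

(* x represents a point of P(L): nonzero null vector *)
Definition null_rep (x : vec) : Prop := x != 0 /\ ip x x = 0.

Definition peq (x y : vec) : Prop := exists lam : R, lam != 0 /\ y = lam *: x.

Definition inversion (a x : vec) : vec := x - ((2 * ip x a) / ip a a) *: a.

(* sigma_a is an M-inversion (w.r.t. the point-sphere complex p) *)
Definition is_M_inversion (p a : vec) : Prop := ip a p = 0 /\ ip a a != 0.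

(* planar discrete curve on Z: f i represents a point of R^2 ∪ {oo} *)
Definition planar_curve (p : vec) (f : int -> vec) : Prop :=
  forall i : int, null_rep (f i) /\ ip (f i) p = 0.

(* circle congruence c in P^± along f (c_i a circle, <c_i,p> <> 0) *)
Definition circle_congruence (p : vec) (f c : int -> vec) : Prop :=
  forall i : int, null_rep (c i) /\ ip (c i) p != 0 /\
    ip (c i) (f (i - 1)) = 0 /\ ip (c i) (f (i + 1)) = 0.

Definition normalize (p c : vec) : vec := (- ip c p)^-1 *: c.

(* evolution map: edge (i,i+1) |-> sigma_{a i} *)
Definition evolution_map (p : vec) (f a : int -> vec) : Prop :=
  forall i : int, is_M_inversion p (a i) /\ peq (f (i + 1)) (inversion (a i) (f i)).

Definition m_type_evolution_map (p m : vec) (f a : int -> vec) : Prop :=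
  evolution_map p f a /\
  forall (i : int) (al be : R),
    inversion (a i) (al *: m + be *: p) = al *: m + be *: p.

Definition m_type_darboux_evolution_map (p m : vec) (f c a : int -> vec) : Prop :=
  m_type_evolution_map p m f a /\
  forall i : int, inversion (a i) (normalize p (c i)) = normalize p (c (i + 1)).

Definition r_edge (p : vec) (c : int -> vec) (i : int) : vec :=
  ip (c (i + 1)) p *: c i - ip (c i) p *: c (i + 1).

(* tangential circle congruence t : E -> P(L), t i for the edge (i,i+1) *)
Definition tangential_congruence (f c t : int -> vec) : Prop :=
  forall i : int, null_rep (t i) /\
    ip (t i) (f i) = 0 /\ ip (t i) (f (i + 1)) = 0 /\
    ip (t i) (c i) = 0 /\ ip (t i) (c (i + 1)) = 0.

End Defs.

(* Main.v *)
Require Import Defs.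
From HB Require Import structures.
From mathcomp Require Import all_boot all_order all_algebra.
From mathcomp Require Import ring lra zify.
Import Order.TTheory GRing.Theory Num.Theory.
Local Open Scope ring_scope.
Set Implicit Arguments. Unset Strict Implicit.
Definition o k : 'I_5 := inord k.
Definition o3 k : 'I_3 := inord k.
Section S.
Variable R : realFieldType.
Notation vec := 'rV[R]_5.
Lemma ipE (x y : vec) : ip x y = x 0 (o 0) * y 0 (o 0) + x 0 (o 1) * y 0 (o 1) + x 0 (o 2) * y 0 (o 2) - x 0 (o 3) * y 0 (o 3) - x 0 (o 4) * y 0 (o 4).
Proof. rewrite /ip !big_ord_recr big_ord0 /= !mul1r !mulN1r add0r !mulNr.
congr (_ + _ + _ - _ - _); congr (_ * _); congr (_ _ _); apply: ord_inj; by rewrite /= inordK.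
Qed.
Lemma sum3 (F : 'I_3 -> R) : \sum_(i < 3) F i = F (o3 0) + F (o3 1) + F (o3 2).
Proof. rewrite !big_ord_recr big_ord0 /= add0r.
congr (_ + _ + _); congr (F _); apply: ord_inj; by rewrite /= inordK.
Qed.
Lemma ipC (x y : vec) : ip x y = ip y x.
Proof. rewrite /ip; apply: eq_bigr => k _; ring. Qed.
Lemma ipDl (x y z : vec) : ip (x + y) z = ip x z + ip y z.
Proof. rewrite /ip -big_split; apply: eq_bigr => k _ /=; rewrite mxE; ring. Qed.
Lemma ipZl (a : R) (x z : vec) : ip (a *: x) z = a * ip x z.
Proof. rewrite /ip mulr_sumr; apply: eq_bigr => k _ /=; rewrite mxE; ring. Qed.
Lemma ipNl (x z : vec) : ip (- x) z = - ip x z.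
Proof. by rewrite -scaleN1r ipZl mulN1r. Qed.
Lemma ipBl (x y z : vec) : ip (x - y) z = ip x z - ip y z.
Proof. by rewrite ipDl ipNl. Qed.
Lemma ip0l (z : vec) : ip 0 z = 0.
Proof. by rewrite -(scale0r 0) ipZl mul0r. Qed.
Lemma ipDr (x y z : vec) : ip z (x + y) = ip z x + ip z y.
Proof. by rewrite ipC ipDl !(ipC z). Qed.
Lemma ipZr (a : R) (x z : vec) : ip z (a *: x) = a * ip z x.
Proof. by rewrite ipC ipZl ipC. Qed.
Lemma ipNr (x z : vec) : ip z (- x) = - ip z x.
Proof. by rewrite ipC ipNl ipC. Qed.
Lemma ipBr (x y z : vec) : ip z (x - y) = ip z x - ip z y.
Proof. by rewrite ipDr ipNr. Qed.

Lemma null_zero (z : vec) : ip z z = 0 -> z 0 (o 3) = 0 -> z 0 (o 4) = 0 -> z = 0.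
Proof.
move=> h h3 h4; rewrite ipE h3 h4 !mulr0 !subr0 in h.
have h0 : z 0 (o 0) = 0 by nra.
have h1 : z 0 (o 1) = 0 by nra.
have h2 : z 0 (o 2) = 0 by nra.
apply/rowP => k; rewrite [RHS]mxE. have -> : k = o (val k) by apply: ord_inj; rewrite /o inordK ?ltn_ord. 
case: k => [[|[|[|[|[|k]]]]] Hk] //=.
Qed.

Lemma triple (x1 x2 x3 : vec) :
  ip x1 x1 = 0 -> ip x2 x2 = 0 -> ip x3 x3 = 0 ->
  ip x1 x2 = 0 -> ip x1 x3 = 0 -> ip x2 x3 = 0 ->
  exists a b c : R, [|| a != 0, b != 0 | c != 0] /\ a *: x1 + b *: x2 + c *: x3 = 0.
Proof.
move=> h11 h22 h33 h12 h13 h23.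
pose xs (i : 'I_3) := if val i == 0%N then x1 else if val i == 1%N then x2 else x3.
pose A : 'M[R]_(3,2) := \matrix_(i, j) xs i 0 (o (3 + val j)).
have hk : kermx A != 0.
  rewrite -mxrank_eq0 mxrank_ker.
  have := rank_leq_col A; lia.
have [v hv vn0] := rowV0Pn hk.
have hvA : v *m A = 0 by apply/sub_kermxP.
exists (v 0 (o3 0)), (v 0 (o3 1)), (v 0 (o3 2)); split.
  apply: contraR vn0; rewrite !negb_or !negbK => /and3P [/eqP e0 /eqP e1 /eqP e2].
  apply/eqP/rowP => k; rewrite !mxE; have -> : (k = o3 (val k)) by apply: ord_inj; rewrite /o3 inordK ?ltn_ord.
  by case: k => [[|[|[|k]]] Hk].
set z := _ + _ + _.
have hz : ip z z = 0.
  rewrite /z !(ipDl, ipDr, ipZl, ipZr) h11 h22 h33 h12 h13 h23 (ipC x2 x1) (ipC x3 x1) (ipC x3 x2) h12 h13 h23.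
  ring.
have hc : forall j : 'I_2, z 0 (o (3 + val j)) = 0.
  move=> j; have := congr1 (fun M : 'M[R]_(1,2) => M 0 j) hvA; by rewrite !mxE sum3 /A !mxE /xs /o3 /= !inordK.
apply: null_zero => //; [exact: (hc (0 : 'I_2)) | exact: (hc (1 : 'I_2))].
Qed.

Lemma iso2 (t w C C' : vec) : ip t t = 0 -> ip w w = 0 -> ip C C = 0 ->
  ip t w = 0 -> ip t C = 0 -> ip w C = 0 -> ip t C' = 0 -> ip w C' = 0 ->
  ip C C' != 0 -> t != 0 -> exists mu, w = mu *: t.
Proof.
move=> htt hww hCC htw htC hwC htC' hwC' hg ht0.
have [a [b [g [hn hz]]]] := @triple t w C htt hww hCC htw htC hwC.
have hg0 : g = 0.
  have := congr1 (fun v => ip v C') hz; rewrite /= !ipDl !ipZl htC' hwC' ip0l.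
  rewrite !mulr0 !add0r => /eqP; rewrite mulf_eq0 (negbTE hg) orbF => /eqP //.
have hab : a *: t + b *: w = 0 by rewrite hg0 scale0r addr0 in hz.
case: (eqVneq b 0) => hb.
  rewrite hb scale0r addr0 in hab; rewrite hb hg0 eqxx /= orbF in hn.
  by move/eqP: hab; rewrite scaler_eq0 (negbTE hn) (negbTE ht0).
exists (- a / b); apply/rowP => k.
have := congr1 (fun v : vec => v 0 k) hab; rewrite !mxE => /eqP; rewrite addrC addr_eq0 => /eqP e.
apply: (mulfI hb); rewrite e; field; exact: hb.
Qed.

Definition tang (F G C C' t : vec) :=
  null_rep t /\ ip t F = 0 /\ ip t G = 0 /\ ip t C = 0 /\ ip t C' = 0.

Lemma edge (p F G C C' : vec) :
  F != 0 -> ip F F = 0 -> G != 0 -> ip G G = 0 -> ip F p = 0 -> ip G p = 0 ->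
  ip C C = 0 -> ip C' C' = 0 -> ip C p != 0 -> ip C' p != 0 ->
  ip C' F = 0 -> ip C G = 0 ->
  ip (ip C' p *: C - ip C p *: C') (ip C' p *: C - ip C p *: C') != 0 ->
  ((exists lam, lam != 0 /\ inversion (ip C' p *: C - ip C p *: C') F = lam *: G) ->
     tang F G C C' (F - (ip F C / ip C C') *: C'))
  /\ ((exists t, tang F G C C' t) ->
     exists lam, lam != 0 /\ inversion (ip C' p *: C - ip C p *: C') F = lam *: G).
Proof.
move=> hF0 hFF hG0 hGG hFp hGp hCC hC'C' ha hb hC'F hCG hr.
have hrr : ip (ip C' p *: C - ip C p *: C') (ip C' p *: C - ip C p *: C')
   = -2 * ip C' p * ip C p * ip C C'.
  by rewrite !(ipBl,ipBr,ipZl,ipZr) hCC hC'C' (ipC C' C); ring.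
have hg : ip C C' != 0.
  by apply: contraNneq hr => e; rewrite hrr e mulr0.
have hFC' : ip F C' = 0 by rewrite ipC.
have hGC : ip G C = 0 by rewrite ipC.
have hC'C : ip C' C = ip C C' by rewrite ipC.
split.
  case=> lam [hl hinv].
  set y := ip F C / ip C C'.
  have hFC : ip F C = y * ip C C' by rewrite /y divfK.
  clearbody y.
  have htC : ip (F - y *: C') C = 0 by rewrite ipBl ipZl hC'C hFC subrr.
  have htC' : ip (F - y *: C') C' = 0 by rewrite ipBl ipZl hFC' hC'C' mulr0 subrr.
  have htF : ip (F - y *: C') F = 0 by rewrite ipBl ipZl hFF hC'F mulr0 subrr.
  rewrite /tang /null_rep; split; [split|split; [exact: htF|split; [|by split]]].
  - apply/negP => /eqP e.
    have hF : F = y *: C' by apply/eqP; rewrite -subr_eq0 e.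
    move: hFp; rewrite hF ipZl => /eqP; rewrite mulf_eq0 (negbTE hb) orbF => /eqP y0.
    by move: hF0; rewrite hF y0 scale0r eqxx.
  - rewrite !(ipBl,ipBr,ipZl,ipZr) hFF hC'C' hFC' hC'F; ring.
  - have : lam * ip (F - y *: C') G = 0.
      rewrite -ipZr -hinv /inversion ipBr ipZr htF.
      by rewrite !(ipBr, ipZr) htC htC' !mulr0 subrr mulr0 subrr.
    by move/eqP; rewrite mulf_eq0 (negbTE hl) /= => /eqP.
case=> t0 [[ht0 htt] [htF [htG [htC htC']]]].
set y := ip F C / ip C C'.
have hFC : ip F C = y * ip C C' by rewrite /y divfK.
clearbody y.
set z := ip G C' / ip C C'.
have hGC' : ip G C' = z * ip C C' by rewrite /z divfK.
clearbody z.
have [mu hmu] : exists mu, F - y *: C' = mu *: t0.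
  apply: (@iso2 t0 _ C C') => //.
  - rewrite !(ipBl,ipBr,ipZl,ipZr) hFF hC'C' hFC' hC'F; ring.
  - by rewrite !(ipBr,ipZr) htF htC' mulr0 subrr.
  - by rewrite !(ipBl,ipZl) hFC hC'C subrr.
  - by rewrite !(ipBl,ipZl) hFC' hC'C' mulr0 subrr.
have [mu' hmu'] : exists mu, G - z *: C = mu *: t0.
  apply: (@iso2 t0 _ C C') => //.
  - rewrite !(ipBl,ipBr,ipZl,ipZr) hGG hCC hGC hCG; ring.
  - by rewrite !(ipBr,ipZr) htG htC mulr0 subrr.
  - by rewrite !(ipBl,ipZl) hGC hCC mulr0 subrr.
  - by rewrite !(ipBl,ipZl) hGC' subrr.
have hF : F = mu *: t0 + y *: C' by rewrite -hmu subrK.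
have hG : G = mu' *: t0 + z *: C by rewrite -hmu' subrK.
have hFp' : mu * ip t0 p + y * ip C' p = 0 by rewrite -hFp hF ipDl !ipZl.
have hGp' : mu' * ip t0 p + z * ip C p = 0 by rewrite -hGp hG ipDl !ipZl.
have hmu'0 : mu' != 0.
  apply/negP => /eqP e; rewrite e mul0r add0r in hGp'.
  move/eqP: hGp'; rewrite mulf_eq0 (negbTE ha) orbF => /eqP z0.
  by move: hG0; rewrite hG e z0 !scale0r addr0 eqxx.
have hmu0 : mu != 0.
  apply/negP => /eqP e; rewrite e mul0r add0r in hFp'.
  move/eqP: hFp'; rewrite mulf_eq0 (negbTE hb) orbF => /eqP y0.
  by move: hF0; rewrite hF e y0 !scale0r addr0 eqxx.
have hP : ip t0 p = - (z * ip C p) / mu'.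
  apply: (mulIf hmu'0); rewrite divfK // mulrC; apply/eqP; rewrite -addr_eq0; exact/eqP.
have hy : y = mu * z * ip C p / (mu' * ip C' p).
  apply: (mulIf hb); rewrite hP in hFp'.
  move/eqP: hFp'; rewrite addrC addr_eq0 => /eqP ->; field.
  by rewrite hmu'0 hb.
exists (mu / mu'); split; first by rewrite mulf_neq0 ?invr_neq0.
have hs : 2 * ip F (ip C' p *: C - ip C p *: C') /
  ip (ip C' p *: C - ip C p *: C') (ip C' p *: C - ip C p *: C') = - y / ip C p.
  rewrite hrr !(ipBr, ipZr) hFC hFC'; field; by rewrite ha hg hb.
rewrite /inversion hs hF hG; apply/rowP => k; rewrite !mxE hy; field.
by rewrite hmu'0 ha hb.
Qed.

Lemma norm_ok (p C C' : vec) : ip C C = 0 -> ip C' C' = 0 -> ip C p != 0 -> ip C' p != 0 ->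
  ip (ip C' p *: C - ip C p *: C') (ip C' p *: C - ip C p *: C') != 0 ->
  inversion (ip C' p *: C - ip C p *: C') (normalize p C) = normalize p C'.
Proof.
move=> hCC hC'C' ha hb hr.
have hrr : ip (ip C' p *: C - ip C p *: C') (ip C' p *: C - ip C p *: C')
   = -2 * ip C' p * ip C p * ip C C'.
  by rewrite !(ipBl,ipBr,ipZl,ipZr) hCC hC'C' (ipC C' C); ring.
have hg : ip C C' != 0.
  by apply: contraNneq hr => e; rewrite hrr e mulr0.
rewrite /inversion /normalize hrr ipZl !(ipBr,ipZr) hCC.
apply/rowP => k; rewrite !mxE; field.
by rewrite ha hb hg.
Qed.

Lemma mtype_ok (p m C C' : vec) (al be : R) : ip C m = 0 -> ip C' m = 0 ->
  inversion (ip C' p *: C - ip C p *: C') (al *: m + be *: p) = al *: m + be *: p.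
Proof.
move=> hCm hC'm; rewrite /inversion.
have -> : ip (al *: m + be *: p) (ip C' p *: C - ip C p *: C') = 0.
  rewrite ipDl !ipZl !(ipBr, ipZr) (ipC m C) (ipC m C') hCm hC'm (ipC p C) (ipC p C'); ring.
by rewrite mulr0 mul0r scale0r subr0.
Qed.
End S.

Theorem lemma3p7 (R : realFieldType) (p mbar : 'rV[R]_5)
    (f c : int -> 'rV[R]_5) :
  ip p p = -1 ->
  planar_curve p f ->
  circle_congruence p f c ->
  mbar != 0 ->
  (forall i : int, ip (c i) mbar = 0) ->
  (forall i : int, ip (r_edge p c i) (r_edge p c i) != 0) ->
  (m_type_darboux_evolution_map p mbar f c (r_edge p c) <->
   exists t : int -> 'rV[R]_5, tangential_congruence f c t).
Proof.
move=> hpp hf hc hm0 hcm hr.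
have hE : forall i : int,
  ((exists lam, lam != 0 /\ inversion (r_edge p c i) (f i) = lam *: f (i + 1)) ->
     tang (f i) (f (i + 1)) (c i) (c (i + 1))
       (f i - (ip (f i) (c i) / ip (c i) (c (i + 1))) *: c (i + 1)))
  /\ ((exists t, tang (f i) (f (i + 1)) (c i) (c (i + 1)) t) ->
     exists lam, lam != 0 /\ inversion (r_edge p c i) (f i) = lam *: f (i + 1)).
  move=> i.
  have [[hF0 hFF] hFp] := hf i.
  have [[hG0 hGG] hGp] := hf (i + 1).
  have [[hC0 hCC] [ha [_ hCG]]] := hc i.
  have [[hC'0 hC'C'] [hb [hC'F _]]] := hc (i + 1).
  rewrite addrK in hC'F.
  exact: (@edge _ p (f i) (f (i + 1)) (c i) (c (i + 1)) hF0 hFF hG0 hGG hFp hGp hCC hC'C' ha hb hC'F hCG (hr i)).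
split.
  case=> [[hev hm] hn].
  exists (fun i => f i - (ip (f i) (c i) / ip (c i) (c (i + 1))) *: c (i + 1)) => i.
  apply: (proj1 (hE i)); exact: (proj2 (hev i)).
case=> t ht.
split; [split|].
- move=> i; split; last exact: (proj2 (hE i)) (ex_intro _ (t i) (ht i)).
  split; last exact: hr i.
  rewrite /r_edge ipBl !ipZl; ring.
- move=> i al be; rewrite /r_edge; exact: mtype_ok (hcm i) (hcm (i + 1)).
- move=> i; have [[_ hCC] [ha _]] := hc i; have [[_ hC'C'] [hb _]] := hc (i + 1).
  exact: norm_ok hCC hC'C' ha hb (hr i).
Qed.
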